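(* Let $P$ be a set of $n\geq 5$ points in general position in the plane, let $\mathcal{P}$ be the set of all closed segments with both endpoints in $P$, let $\mathcal{S}\subseteq\mathcal{P}$ with $s:=|\mathcal{S}|$, and let $\mathcal{P}':=\mathcal{P}\setminus\mathcal{S}$. Suppose that every pair of distinct segments $a,b\in\mathcal{P}'$ satisfies exactly one of the following: (1) $d_{D(P)}(a,b)=1$ (equivalently $a\cap b=\emptyset$); (2) $d_{D(P)}(a,b)=2$ and there is $f_1\in\mathcal{S}$ with $(a\cup b)\cap f_1=\emptyset$; (3) $d_{D(P)}(a,b)=3$ and there are $f_1,f_2\in\mathcal{S}$ with $a\cap f_1=\emptyset$, $f_1\cap f_2=\emptyset$ and $f_2\cap b=\emptyset$; (4) $d_{D(P)}(a,b)=4$, $n=5$, and there are $f_1,f_2,f_3\in\mathcal{S}$ such that $a\cap f_1=\emptyset=f_3\cap b$, $a\cap h\neq\emptyset$ for $h\in\{f_2,f_3\}$, $b\cap h\neq\emptyset$ for $h\in\{f_1,f_2\}$, $f_i\cap f_{i+1}=\emptyset$ for $i\in\{1,2\}$, and $f_1\cap f_3\neq\emptyset$. Then $\mu(D(P))\geq\binom{n}{2}-s$.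
   Context: General position means no three points collinear. $D(P)$ is the graph with vertex set $\mathcal{P}$, two segments adjacent iff they are disjoint; $d_{D(P)}$ is graph distance in $D(P)$. For a graph $G$ and $U\subseteq V(G)$, two distinct vertices $x,y\in U$ are $U$-mutually visible if $G$ contains a shortest $x$-$y$ path none of whose internal vertices lies in $U$; $U$ is a mutual-visibility set if every two distinct vertices of $U$ are $U$-mutually visible. $\mu(G)$ is the maximum size of a mutual-visibility set of $G$. *)

(* Defs.v *)
From HB Require Import structures.
From mathcomp Require Import all_boot all_order all_algebra.
From mathcomp Require Import boolp reals.
Set Implicit Arguments. Unset Strict Implicit. Unset Printing Implicit Defensive.
Import Order.TTheory GRing.Theory Num.Theory.
Local Open Scope ring_scope.

Section Graph.
Variables (V : finType) (adj : V -> V -> Prop).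

(* [walk x s y]: s is the list of vertices visited after x, ending at y. *)
Inductive walk : V -> seq V -> V -> Prop :=
| walk_nil x : walk x [::] x
| walk_cons x z s y : adj x z -> walk z s y -> walk x (z :: s) y.

Definition shortest (x : V) (s : seq V) (y : V) : Prop :=
  walk x s y /\ forall s', walk x s' y -> (size s <= size s')%N.

Definition gdist (x y : V) (d : nat) : Prop :=
  exists s, shortest x s y /\ size s = d.

(* internal vertices of the path x :: s (s ends at y) *)
Definition internal (s : seq V) : seq V := take (size s).-1 s.

Definition mutually_visible (U : {set V}) (x y : V) : Prop :=
  exists s, shortest x s y /\ forall z, z \in internal s -> z \notin U.

Definition mv_set (U : {set V}) : Prop :=
  forall x y, x \in U -> y \in U -> x != y -> mutually_visible U x y.

Definition mu : nat := \max_(U : {set V} | `[< mv_set U >]) #|U|.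
End Graph.

Section Plane.
Variable R : realType.
Definition point := (R * R)%type.

Definition collinear (a b c : point) : Prop :=
  (b.1 - a.1) * (c.2 - a.2) - (b.2 - a.2) * (c.1 - a.1) = 0.

Definition on_segment (a b x : point) : Prop :=
  exists t : R, 0 <= t <= 1 /\
    x = (a.1 + t * (b.1 - a.1), a.2 + t * (b.2 - a.2)).
End Plane.

(* Segments with endpoints among n labelled points: pairs (i,j), i < j. *)
Definition seg (n : nat) := {ij : 'I_n * 'I_n | (ij.1 < ij.2)%N}.

Definition seg_pts (R : realType) n (p : 'I_n -> point R) (e : seg n) (x : point R) : Prop :=
  on_segment (p (val e).1) (p (val e).2) x.

Definition seg_disjoint (R : realType) n (p : 'I_n -> point R) (e f : seg n) : Prop :=
  ~ exists x, seg_pts p e x /\ seg_pts p f x.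

Definition general_position (R : realType) n (p : 'I_n -> point R) : Prop :=
  forall i j k : 'I_n, i != j -> j != k -> i != k -> ~ collinear (p i) (p j) (p k).

Definition DP (R : realType) n (p : 'I_n -> point R) : seg n -> seg n -> Prop :=
  seg_disjoint p.

(* Main.v *)
Require Import Defs.
From HB Require Import structures.
From mathcomp Require Import all_boot all_order all_algebra.
From mathcomp Require Import boolp reals.
Import Order.TTheory GRing.Theory Num.Theory.
Set Implicit Arguments. Unset Strict Implicit.

Lemma card_seg n : ('C(n, 2) <= #|{: seg n}|)%N.
Proof.
rewrite -card_ltn_sorted_tuples.
pose g (t : 2.-tuple 'I_n) := (tnth t ord0, tnth t (@Ordinal 2 1 isT)).
have ginj : injective g.
  move=> t1 t2 [h0 h1]; apply: eq_from_tnth => i.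
  case: i => [[|[|//]] Hi].
    by rewrite (_ : Ordinal Hi = ord0) //; apply: val_inj.
  by rewrite (_ : Ordinal Hi = Ordinal (isT : (1 < 2)%N)) //; apply: val_inj.
rewrite -(card_imset _ ginj) card_sig.
apply: subset_leq_card; apply/subsetP => ij /imsetP [t].
rewrite inE => hs ->; rewrite inE /=.
case: t hs => [[|a [|b [|c s]]] //= Hs].
by rewrite /tnth /= andbT.
Qed.

Lemma seg_disjC (R : realType) n (p : 'I_n -> point R) a b :
  seg_disjoint p a b -> seg_disjoint p b a.
Proof. by move=> H [x [h1 h2]]; apply: H; exists x. Qed.

Lemma shortest_of (V : finType) (adj : V -> V -> Prop) x y s d :
  gdist adj x y d -> walk adj x s y -> size s = d -> shortest adj x s y.
Proof.
move=> [s0 [[_ Hs0] E]] W Hs; split => // s' W'.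
by rewrite Hs -E; apply: Hs0.
Qed.

Theorem lemma7 (R : realType) (n : nat) (p : 'I_n -> point R) (S : {set seg n}) :
  (5 <= n)%N ->
  injective p ->
  general_position p ->
  (forall a b : seg n, a \notin S -> b \notin S -> a != b ->
     [\/ gdist (DP p) a b 1,
         gdist (DP p) a b 2 /\
           (exists f1, f1 \in S /\ seg_disjoint p a f1 /\ seg_disjoint p b f1),
         gdist (DP p) a b 3 /\
           (exists f1 f2, [/\ f1 \in S, f2 \in S, seg_disjoint p a f1,
                              seg_disjoint p f1 f2 & seg_disjoint p f2 b]) |
         [/\ gdist (DP p) a b 4, n = 5 &
           exists f1 f2 f3, f1 \in S /\ f2 \in S /\ f3 \in S /\
             seg_disjoint p a f1 /\ seg_disjoint p f3 b /\
             ~ seg_disjoint p a f2 /\ ~ seg_disjoint p a f3 /\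
             ~ seg_disjoint p b f1 /\ ~ seg_disjoint p b f2 /\
             seg_disjoint p f1 f2 /\ seg_disjoint p f2 f3 /\
             ~ seg_disjoint p f1 f3]]) ->
  ('C(n, 2) - #|S| <= mu (DP p))%N.
Proof.
move=> _ _ _ H.
have mvU : mv_set (DP p) (~: S).
  move=> a b; rewrite !inE => aS bS ab.
  case: (H a b aS bS ab).
  - move=> [s [Hs E]]; exists s; split => // z.
    by case: s Hs E => [|x [|]] //= _ _; rewrite in_nil.
  - move=> [G [f1 [f1S [d1 d2]]]]; exists [:: f1; b]; split.
      apply: (shortest_of G); last by [].
      by apply: walk_cons d1 _; apply: walk_cons (seg_disjC d2) (walk_nil _ _).
    by move=> z; rewrite /internal /= inE => /eqP ->; rewrite inE f1S.
  - move=> [G [f1 [f2 [f1S f2S d1 d2 d3]]]]; exists [:: f1; f2; b]; split.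
      apply: (shortest_of G); last by [].
      apply: walk_cons d1 _; apply: walk_cons d2 _.
      by apply: walk_cons d3 (walk_nil _ _).
    by move=> z; rewrite /internal /= !inE => /orP [] /eqP ->; rewrite ?f1S ?f2S.
  - move=> [G _ [f1 [f2 [f3 X]]]].
    move: X => [f1S [f2S [f3S [d1 [d4 [_ [_ [_ [_ [d2 [d3 _]]]]]]]]]]].
    exists [:: f1; f2; f3; b]; split.
      apply: (shortest_of G); last by [].
      apply: walk_cons d1 _; apply: walk_cons d2 _; apply: walk_cons d3 _.
      by apply: walk_cons d4 (walk_nil _ _).
    move=> z; rewrite /internal /= !inE => /orP [/eqP ->|/orP [] /eqP ->];
      by rewrite ?f1S ?f2S ?f3S.
apply: (@leq_trans #|~: S|).
  by rewrite leq_subLR cardsC card_seg.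
rewrite /mu; apply: (@leq_bigmax_cond _ (fun U => `[< mv_set (DP p) U >]) (fun U => #|U|) (~: S)).
by apply/asboolP.
Qed.
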